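(* Assume hypotheses (A) and (B) and suppose the routing matrix $P$ has a branching structure, i.e. for every $i\in\{1,\dots,d\}$ the set $\{j\in\{1,\dots,d\}:p_{ji}>0\}$ has at most one element. Then for every $\varepsilon>0$ and every $\rho=(\rho_1,\dots,\rho_d)$ with $(\rho P)_i<\rho_i$ for all $i$, the vector $\gamma$ with $\gamma_i=\varepsilon G_{ii}/\rho_i$ ($i=1,\dots,d$) belongs to $\Gamma$.
   Context: Jackson network with $d$ queues: arrival rates $\lambda_i\ge0$, service rates $\mu_i>0$, routing matrix $P=(p_{ij})_{i,j=1}^d$ nonnegative with $p_{ii}=0$, $\sum_jp_{ij}\le1$, $p_{i0}=1-\sum_jp_{ij}$. Hypothesis (A): the jump-rate kernel on $\mathbb{Z}^d$ (jumps $+\epsilon^i$ at rate $\lambda_i$, $-\epsilon^i$ at rate $\mu_ip_{i0}$, $\epsilon^j-\epsilon^i$ at rate $\mu_ip_{ij}$) is irreducible, equivalently spectral radius of $P$ $<1$ and for every $i$ there are $n,j$ with $\lambda_jp^{(n)}_{ji}>0$; the traffic equations $\nu_j=\lambda_j+\sum_i\nu_ip_{ij}$ then have a unique solution with $\nu_i>0$. Hypothesis (B): $\nu_i<\mu_i$ for all $i$. $G=(I-P)^{-1}$, $(\rho P)_i=\sum_j\rho_jp_{ji}$. $Q_{ij}$: probability that the chain on $\{0,\dots,d\}$ with transitions $p_{ij}$ ($0$ absorbing) started at $i$ ever visits $j$ (time $0$ included). For $\gamma\in\mathbb{R}_+^d$, $\overrightarrow{\gamma_i}$ has components $\gamma_i^j=\log(1+Q_{ji}\gamma_i)$;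 $\Gamma$ is the set of $\gamma\in\mathbb{R}_+^d$ such that for every $i$ and nonzero $v\in\mathbb{R}_+^d$ with $v^i=0$, $\overrightarrow{\gamma_i}\cdot v<\max_j\overrightarrow{\gamma_j}\cdot v$. *)

(* Defs.v *)
From HB Require Import structures.
From mathcomp Require Import all_boot all_order all_algebra.
From mathcomp Require Import all_classical all_reals all_analysis.
Set Implicit Arguments. Unset Strict Implicit. Unset Printing Implicit Defensive.
Import Order.TTheory GRing.Theory Num.Theory numFieldNormedType.Exports.
Local Open Scope ring_scope.

Section Jackson.
Variables (R : realType) (d : nat).

Definition pexit (P : 'M[R]_d) (i : 'I_d) : R := 1 - \sum_(j < d) P i j.

Definition jackson_data (lam mu : 'I_d -> R) (P : 'M[R]_d) : Prop :=
  (forall i, 0 <= lam i) /\ (forall i, 0 < mu i) /\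
  (forall i j, 0 <= P i j) /\ (forall i, P i i = 0) /\
  (forall i, \sum_(j < d) P i j <= 1).

Definition evec (i : 'I_d) : 'rV[int]_d := delta_mx 0 i.

Definition is_jump (lam mu : 'I_d -> R) (P : 'M[R]_d) (z : 'rV[int]_d) : Prop :=
  exists i, (z = evec i /\ 0 < lam i)
         \/ (z = - evec i /\ 0 < mu i * pexit P i)
         \/ (exists j, z = evec j - evec i /\ 0 < mu i * P i j).

Definition hypA (lam mu : 'I_d -> R) (P : 'M[R]_d) : Prop :=
  forall x y : 'rV[int]_d, exists s : seq 'rV[int]_d,
    (forall z, z \in s -> is_jump lam mu P z) /\ x + \sum_(z <- s) z = y.

Definition traffic (lam : 'I_d -> R) (P : 'M[R]_d) (nu : 'I_d -> R) : Prop :=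
  forall j, nu j = lam j + \sum_(i < d) nu i * P i j.

(* Hypothesis (B): the (unique under (A)) solution of the traffic equations
   satisfies nu_i < mu_i. *)
Definition hypB (lam mu : 'I_d -> R) (P : 'M[R]_d) : Prop :=
  forall nu, traffic lam P nu -> forall i, nu i < mu i.

Definition branching (P : 'M[R]_d) : Prop :=
  forall i j k : 'I_d, 0 < P j i -> 0 < P k i -> j = k.

Definition Gmx (P : 'M[R]_d) : 'M[R]_d := invmx (1%:M - P).

(* Chain on {0,...,d}: state None = 0 (absorbing), Some i = queue i. *)
Definition ptrans (P : 'M[R]_d) (x y : option 'I_d) : R :=
  match x, y with
  | None, None => 1
  | None, Some _ => 0
  | Some i, None => pexit P i
  | Some i, Some j => P i j
  end.

(* probability, starting at x, of visiting state (Some j) within n steps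
   (time 0 included), by first-step analysis *)
Fixpoint hitn (P : 'M[R]_d) (j : 'I_d) (n : nat) (x : option 'I_d) : R :=
  if x == Some j then 1 else
  match n with
  | 0 => 0
  | n'.+1 => \sum_(y : option 'I_d) ptrans P x y * hitn P j n' y
  end.

Definition Qhit (P : 'M[R]_d) (i j : 'I_d) : R :=
  limn (fun n => hitn P j n (Some i)).

Definition garrow (P : 'M[R]_d) (gamma : 'I_d -> R) (i : 'I_d) : 'I_d -> R :=
  fun j => ln (1 + Qhit P j i * gamma i).

Definition dotv (a v : 'I_d -> R) : R := \sum_(k < d) a k * v k.

Definition Gamma_set (P : 'M[R]_d) (gamma : 'I_d -> R) : Prop :=
  (forall i, 0 <= gamma i) /\
  forall (i : 'I_d) (v : 'I_d -> R),
    (forall k, 0 <= v k) -> (exists k, v k != 0) -> v i = 0 ->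
    dotv (garrow P gamma i) v <
      \big[Num.max/dotv (garrow P gamma i) v]_(j < d) dotv (garrow P gamma j) v.

End Jackson.

(* Main.v *)
Require Import Defs.
From HB Require Import structures.
From mathcomp Require Import all_boot all_order all_algebra.
From mathcomp Require Import all_classical all_reals all_analysis.
From mathcomp Require Import ring lra.
Import Order.TTheory GRing.Theory Num.Theory numFieldNormedType.Exports.
Local Open Scope ring_scope.


Lemma sum_option (R : nmodType) (T : finType) (F : option T -> R) :
  \sum_(y : option T) F y = F None + \sum_(k : T) F (Some k).
Proof.
rewrite (bigD1 None) //=; congr (_ + _).
rewrite (reindex_omap Some id); last by case.
by apply: eq_bigl => k /=; rewrite eqxx.
Qed.

Section Hit.
Variables (R : realType) (d : nat) (P : 'M[R]_d) (j : 'I_d).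
Hypothesis P0 : forall a b, 0 <= P a b.
Hypothesis Prow : forall a, \sum_b P a b <= 1.

Lemma hitn_None n : hitn P j n None = 0.
Proof.
elim: n => [|n IH] //=.
rewrite sum_option IH mulr0 add0r big1 // => k _; by rewrite mul0r.
Qed.

Lemma hitn_j n : hitn P j n (Some j) = 1.
Proof. by case: n => [|n] /=; rewrite eqxx. Qed.

Lemma Some_neq k : k != j -> (Some k == Some j) = false.
Proof. by move=> kj; apply/eqP => -[] /eqP; rewrite (negbTE kj). Qed.

Lemma hitn_0 k : k != j -> hitn P j 0 (Some k) = 0.
Proof. by move=> kj /=; rewrite Some_neq. Qed.

Lemma hitn_S n k : k != j ->
  hitn P j n.+1 (Some k) = \sum_l P k l * hitn P j n (Some l).
Proof.
move=> kj /=; rewrite Some_neq // sum_option hitn_None mulr0 add0r //.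
Qed.

Lemma hitn_bnd n k : 0 <= hitn P j n (Some k) <= 1.
Proof.
elim: n k => [|n IH] k.
  by case: (eqVneq k j) => [->|kj]; rewrite ?hitn_j ?hitn_0 ?ler01 ?lexx.
case: (eqVneq k j) => [->|kj]; first by rewrite hitn_j ler01 lexx.
rewrite hitn_S // sumr_ge0 /=; last by move=> l _; rewrite mulr_ge0 // (andP (IH l)).1.
apply: le_trans (Prow k); apply: ler_sum => l _.
by rewrite ler_piMr // (andP (IH l)).2.
Qed.

Lemma hitn_mono n k : hitn P j n (Some k) <= hitn P j n.+1 (Some k).
Proof.
elim: n k => [|n IH] k.
  case: (eqVneq k j) => [->|kj]; first by rewrite !hitn_j.
  by rewrite hitn_0 // (andP (hitn_bnd 1 k)).1.
case: (eqVneq k j) => [->|kj]; first by rewrite !hitn_j.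
rewrite !hitn_S //; apply: ler_sum => l _; by rewrite ler_wpM2l.
Qed.

Let u k := fun n => hitn P j n (Some k).

Lemma u_nd k : {homo u k : n m / (n <= m)%N >-> n <= m}.
Proof. by apply/nondecreasing_seqP => n; exact: hitn_mono. Qed.

Lemma u_cvg k : (u k n @[n --> \oo] --> Qhit P k j)%classic.
Proof.
have: cvgn (u k).
  apply: nondecreasing_is_cvgn; first exact: u_nd.
  by exists 1 => _ [n _ <-]; rewrite (andP (hitn_bnd n k)).2.
done.
Qed.

Lemma Qhit_bnd k : 0 <= Qhit P k j <= 1.
Proof.
apply/andP; split.
  apply: le_trans (nondecreasing_cvgn_le (u_nd k) _ 0); last first.
    exact: (cvgP _ (u_cvg k)).
  by rewrite (andP (hitn_bnd 0 k)).1.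
apply: limr_le; first exact: (cvgP _ (u_cvg k)).
by near=> n; rewrite (andP (hitn_bnd n k)).2.
Unshelve. all: end_near.
Qed.

Lemma Qhit_j : Qhit P j j = 1.
Proof.
apply: (cvg_lim _ (_ : (u j n @[n --> \oo] --> (1:R))%classic)) => //.
rewrite /u; under eq_fun do rewrite hitn_j; exact: cvg_cst.
Qed.

Lemma Qhit_S k : k != j -> Qhit P k j = \sum_l P k l * Qhit P l j.
Proof.
move=> kj.
have h1 : (u k n.+1 @[n --> \oo] --> Qhit P k j)%classic.
  by rewrite (cvg_shiftS (u k)); exact: u_cvg.
have h2 : (u k n.+1 @[n --> \oo] --> \sum_l P k l * Qhit P l j)%classic.
  rewrite /u; under eq_fun do rewrite hitn_S //.
  apply: cvg_big => //; first exact: add_continuous.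
  move=> l _; apply: cvgMl_tmp; exact: u_cvg.
exact: (cvg_unique _ h1 h2).
Qed.
End Hit.


Section Main.
Variables (R : realType) (d : nat) (P : 'M[R]_d) (rho : 'I_d -> R).
Hypothesis P0 : forall a b, 0 <= P a b.
Hypothesis Prow : forall a, \sum_b P a b <= 1.
Hypothesis hr : forall i, \sum_(j < d) rho j * P j i < rho i.

Lemma rho_ge0 i : 0 <= rho i.
Proof.
case: (boolP [exists k, rho k < 0]) => [/existsP [k0 hk0]|].
  exfalso.
  set N := fun k => rho k < 0.
  have h1 : \sum_(i | N i) \sum_j rho j * P j i < \sum_(i | N i) rho i.
    apply: ltr_sum; first by apply/hasP; exists k0 => //; rewrite mem_index_enum.
    by move=> l _; exact: hr.
  have h2 : \sum_(i | N i) rho i <= \sum_(i | N i) \sum_j rho j * P j i.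
    apply: (@le_trans _ _ (\sum_(i | N i) \sum_(j | N j) rho j * P j i)); last first.
      apply: ler_sum => l _; rewrite [X in _ <= X](bigID N) /= lerDl.
      apply: sumr_ge0 => m; rewrite /N -leNgt => hm; exact: mulr_ge0.
    rewrite exchange_big /=; apply: ler_sum => l hl.
    rewrite -mulr_sumr; rewrite -[X in X <= _]mulr1 ler_wnM2l //; first by rewrite ltW.
    apply: le_trans (Prow l); rewrite [X in _ <= X](bigID N) /= lerDl.
    by apply: sumr_ge0 => *.
  by move: (lt_le_trans h1 h2); rewrite ltxx.
by rewrite negb_exists => /forallP /(_ i); rewrite -leNgt.
Qed.

Lemma rho_gt0 i : 0 < rho i.
Proof.
apply: le_lt_trans (hr i); apply: sumr_ge0 => j _; apply: mulr_ge0 => //; exact: rho_ge0.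
Qed.

Lemma uniq0 (x : 'I_d -> R) : (forall k, x k = \sum_l P k l * x l) -> forall k, x k = 0.
Proof.
move=> hx.
have ha k : `|x k| <= \sum_l P k l * `|x l|.
  rewrite hx; apply: le_trans (ler_norm_sum _ _ _) _; apply: ler_sum => l _.
  by rewrite normrM ger0_norm.
set c := fun l => rho l - \sum_k rho k * P k l.
have hc l : 0 < c l by rewrite /c subr_gt0.
have hs : \sum_l c l * `|x l| <= 0.
  rewrite /c; under eq_bigr do rewrite mulrBl.
  rewrite sumrB subr_le0.
  apply: (@le_trans _ _ (\sum_k rho k * \sum_l P k l * `|x l|)).
    by apply: ler_sum => k _; rewrite ler_wpM2l // rho_ge0.
  rewrite (eq_bigr (fun k => \sum_l rho k * P k l * `|x l|)); last first.
    by move=> k _; rewrite mulr_sumr; apply: eq_bigr => l _; rewrite mulrA.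
  rewrite exchange_big /=; apply: ler_sum => l _; rewrite mulr_suml lexx //.
have h0 : \sum_l c l * `|x l| = 0.
  by apply/eqP; rewrite eq_le hs sumr_ge0 // => l _; rewrite mulr_ge0 // ltW.
have hp : forall l, true -> 0 <= c l * `|x l|.
  by move=> l _; rewrite mulr_ge0 // ltW.
move=> k; have := psumr_eq0P hp h0.
move=> /(_ k isT) /eqP; rewrite mulf_eq0 gt_eqF //= normr_eq0 => /eqP //.
Qed.

Lemma unitIP : (1%:M - P) \in unitmx.
Proof.
rewrite unitmxE unitfE -det_tr; apply/negP => /det0P [v vn0 hv].
move/negP: vn0; apply; apply/eqP/rowP => k; rewrite mxE.
have hx : forall k, v 0 k = \sum_l P k l * v 0 l.
  move=> m; move/rowP: hv => /(_ m); rewrite !mxE.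
  under eq_bigr do rewrite !mxE.
  under eq_bigr do rewrite mulrBr.
  rewrite sumrB (bigD1 m) //= eqxx mulr1n mulr1 big1; last first.
    by move=> l /negbTE; rewrite eq_sym => ->; rewrite mulr0n mulr0.
  rewrite addr0 => /eqP; rewrite subr_eq0 => /eqP ->.
  by apply: eq_bigr => l _; rewrite mulrC.
exact: uniq0 hx k.
Qed.

Let G := Gmx P.

Lemma Gcol k i : G k i = (k == i)%:R + \sum_l P k l * G l i.
Proof.
have := mulmxV unitIP; rewrite mulmxBl mul1mx => /matrixP /(_ k i).
rewrite !mxE => <-; rewrite /G /Gmx; by rewrite subrK.
Qed.

Lemma Grow k i : G k i = (k == i)%:R + \sum_l G k l * P l i.
Proof.
have := mulVmx unitIP; rewrite mulmxBr mulmx1 => /matrixP /(_ k i).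
rewrite !mxE => <-; rewrite /G /Gmx; by rewrite subrK.
Qed.

Lemma QG i : 0 < G i i /\ forall k, 0 <= G k i /\ Qhit P k i * G i i = G k i.
Proof.
set q := fun k => Qhit P k i.
set s := \sum_l P i l * q l.
have qb k : 0 <= q k <= 1 := @Qhit_bnd _ _ P i P0 Prow k.
have s0 : 0 <= s by apply: sumr_ge0 => l _; rewrite mulr_ge0 // (andP (qb l)).1.
have s1 : s <= 1.
  apply: le_trans (Prow i); apply: ler_sum => l _; by rewrite ler_piMr // (andP (qb l)).2.
have hx : forall k, q k - (1 - s) * G k i = 0.
  apply: uniq0 => k.
  under eq_bigr do rewrite mulrBr.
  rewrite sumrB; under [X in _ = _ - X]eq_bigr do rewrite mulrCA.
  rewrite -mulr_sumr.
  case: (eqVneq k i) => [->|ki].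
    rewrite /q (@Qhit_j _ _ P i) -/s (Gcol i i) eqxx mulrDr mulr1; lra.
  rewrite /q (@Qhit_S _ _ P i P0 Prow k ki) (Gcol k i) (negbTE ki) add0r //.
have e k : q k = (1 - s) * G k i by apply/eqP; rewrite -subr_eq0 hx.
have hii : 1 = (1 - s) * G i i by rewrite -e /q (@Qhit_j _ _ P i).
have sp : 0 < 1 - s.
  rewrite lt_neqAle subr_ge0 s1 andbT; apply/negP => /eqP h0.
  by move: hii; rewrite -h0 mul0r => /eqP; rewrite oner_eq0.
have Gi : G i i = (1 - s)^-1.
  by apply: (mulfI (negbT (gt_eqF sp))); rewrite -hii mulfV // gt_eqF.
split; first by rewrite Gi invr_gt0.
move=> k; split.
  have -> : G k i = q k / (1 - s) by rewrite e mulrC mulKf // gt_eqF.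
  by apply: divr_ge0; [exact: (andP (qb k)).1 | exact: ltW].
by rewrite -/(q k) e Gi mulrAC mulfV ?gt_eqF // mul1r.
Qed.

End Main.


Lemma bigmax_ge (R : realType) (d : nat) (F : 'I_d -> R) x j :
  F j <= \big[Num.max/x]_(k < d) F k.
Proof. by rewrite (bigD1 j) //= le_max lexx. Qed.

Theorem proposition3p1 (R : realType) (d : nat)
  (lam mu : 'I_d -> R) (P : 'M[R]_d) :
  jackson_data lam mu P -> hypA lam mu P -> hypB lam mu P -> branching P ->
  forall (eps : R) (rho : 'I_d -> R), 0 < eps ->
  (forall i, \sum_(j < d) rho j * P j i < rho i) ->
  Gamma_set P (fun i => eps * Gmx P i i / rho i).
Proof.
move=> [lam0 [mu0 [P0 [Pii Prow]]]] _ _ br eps rho eps0 hr.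
have rp := @rho_gt0 _ _ P rho P0 Prow hr.
have QGi := @QG _ _ P rho P0 Prow hr.
set G := Gmx P.
set gam := fun i => eps * G i i / rho i.
have Gii i : 0 < G i i := (QGi i).1.
have Gge k i : 0 <= G k i := ((QGi i).2 k).1.
have Qg k i : Qhit P k i * gam i = eps * G k i / rho i.
  by rewrite -((QGi i).2 k).2 /gam; ring.
set f := fun j k => eps * G k j / rho j.
have f0 j k : 0 <= f j k.
  by rewrite /f divr_ge0 ?mulr_ge0 // ltW.
have garrowE j v : dotv (garrow P gam j) v = \sum_k ln (1 + f j k) * v k.
  by rewrite /dotv /garrow; apply: eq_bigr => k _; rewrite Qg mulrC.
split.
  by move=> i; rewrite /gam divr_ge0 ?mulr_ge0 // ltW.
move=> i v v0 [k0 vk0] vi.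
suff [j hj] : exists j, dotv (garrow P gam i) v < dotv (garrow P gam j) v.
  apply: (lt_le_trans hj); exact: bigmax_ge.
have vpos k : v k != 0 -> 0 < v k by move=> h; rewrite lt_neqAle eq_sym h v0.
case: (pselect (exists m k, 0 < P m i /\ 0 < v k /\ 0 < G k m)).
  move=> [m [k1 [Pmi [vk1 Gk1m]]]]; exists m; rewrite !garrowE.
  have Pz l : l != m -> P l i = 0.
    move=> lm; apply/eqP; rewrite eq_le P0 andbT leNgt; apply/negP => hl.
    by move/eqP: lm; apply; exact: br hl Pmi.
  have Gk k : k != i -> G k i = G k m * P m i.
    move=> ki; rewrite (@Grow _ _ P rho P0 Prow hr) (negbTE ki) add0r (bigD1 m) //= big1 ?addr0 //.
    by move=> l lm; rewrite Pz // mulr0.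
  have rm : rho m * P m i < rho i.
    apply: le_lt_trans (hr i); rewrite (bigD1 m) //= lerDl sumr_ge0 // => l _.
    by rewrite mulr_ge0 // ltW.
  have tt : P m i / rho i < (rho m)^-1.
    rewrite -subr_lt0.
    have -> : P m i / rho i - (rho m)^-1 = (rho m * P m i - rho i) / (rho i * rho m).
      by field; rewrite !gt_eqF.
    by rewrite pmulr_llt0 ?invr_gt0 ?mulr_gt0 // subr_lt0.
  have fE k : k != i -> f i k = eps * G k m * (P m i / rho i).
    by move=> ki; rewrite /f Gk //; ring.
  have fE' k : f m k = eps * G k m * (rho m)^-1 by rewrite /f; ring.
  have pos1 j k : 1 + f j k \is Num.pos by rewrite posrE ltr_wpDr.
  rewrite (bigD1 k1) //= [X in _ < X](bigD1 k1) //=.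
  have k1i : k1 != i by apply/eqP => e; move: vk1; rewrite e vi ltxx.
  apply: ltr_leD.
    rewrite ltr_pM2r // ltr_ln ?pos1 // ltrD2l fE // fE' ltr_pM2l //.
    by rewrite mulr_gt0.
  apply: ler_sum => k _.
  case: (eqVneq k i) => [->|ki]; first by rewrite vi !mulr0.
  rewrite ler_wpM2r // ler_ln ?pos1 // lerD2l fE // fE'.
  by apply: ler_wpM2l; [rewrite mulr_ge0 // ltW | exact: ltW].
move=> hn; exists k0; rewrite !garrowE.
have -> : \sum_k ln (1 + f i k) * v k = 0.
  apply: big1 => k _.
  case: (eqVneq k i) => [->|ki]; first by rewrite vi mulr0.
  case: (eqVneq (v k) 0) => [->|vkn]; first by rewrite mulr0.
  have Gki : G k i = 0.
    rewrite (@Grow _ _ P rho P0 Prow hr) (negbTE ki) add0r big1 // => l _.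
    case: (ltrP 0 (P l i)) => [Pl|Pl].
      have -> : G k l = 0.
        apply/eqP; rewrite eq_le Gge andbT leNgt; apply/negP => Gkl.
        by apply: hn; exists l, k; split => //; split => //; exact: vpos.
      by rewrite mul0r.
    have -> : P l i = 0 by apply/eqP; rewrite eq_le Pl P0.
    by rewrite mulr0.
  by rewrite /f Gki mulr0 mul0r addr0 ln1 mul0r.
rewrite (bigD1 k0) //=.
apply: (@lt_le_trans _ _ (ln (1 + f k0 k0) * v k0)).
  rewrite mulr_gt0 ?vpos // ln_gt0 // ltrDl /f divr_gt0 ?mulr_gt0 //.
by rewrite lerDl sumr_ge0 // => k _; rewrite mulr_ge0 // ln_ge0 // lerDl.
Qed.
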